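(* Let $G=(V,E)$ be an event graph. Then $\mathrm{dec}(G)$ has exactly one sink component; in particular, the sink component $\mathcal C$ that is the only sink component reachable from every node $(v,\emptyset)$, $v\in V$, is the only sink component of $\mathrm{dec}(G)$, and it is reachable from every node of $\mathrm{dec}(G)$.
   Context: An event graph is a finite, connected, undirected graph $G=(V,E)$, with $n=|V|$, in which every node $v$ carries a label that is either $\mathtt{i}x_v$ (insertion of $x_v$) or $\mathtt{d}x_v$ (deletion of $x_v$), where $x_v$ is an element of a finite universe $\mathcal U$. Write $\mathcal U_{|V}=\{x_v : v\in V\}$. It is assumed that for each $x\in\mathcal U_{|V}$ at least one node is labeled $\mathtt{i}x$ and at least one node is labeled $\mathtt{d}x$. The decorated graph $\mathrm{dec}(G)$ is the directed graph with vertex set $V\times 2^{\mathcal U_{|V}}$ in which $((u,X),(v,Y))$ is an edge if and only if $\{u,v\}\in E$ and $Y=X\cup\{x_v\}$ when $v$ is labeled $\mathtt{i}x_v$, respectively $Y=X\setminus\{x_v\}$ when $v$ is labeled $\mathtt{d}x_v$. A sink component of $\mathrm{dec}(G)$ is a strongly connected component of $\mathrm{dec}(G)$ from which no edge leads to a different strongly connected component. *)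

(* Defs.v *)
From mathcomp Require Import all_boot.
Set Implicit Arguments. Unset Strict Implicit. Unset Printing Implicit Defensive.

Section EventGraph.
Variables (V U : finType).
(* e : adjacency relation of the undirected graph G on V;
   ins v = true  <-> v is labeled  i x_v,  ins v = false <-> v is labeled d x_v. *)
Variables (e : rel V) (ins : V -> bool) (x : V -> U).

Definition event_graph : Prop :=
  [/\ 0 < #|V|,
      symmetric e,
      irreflexive e,
      (forall u v, connect e u v) &
      (forall v, (exists u, x u = x v /\ ins u) /\ (exists w, x w = x v /\ ~~ ins w))].

Definition UV : {set U} := [set x v | v : V].

Definition dnode (p : V * {set U}) : bool := p.2 \subset UV.

Definition dedge : rel (V * {set U}) := fun p q =>
  [&& dnode p, dnode q, e p.1 q.1 &
      q.2 == (if ins q.1 then x q.1 |: p.2 else p.2 :\ x q.1)].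

Definition scc (C : {set V * {set U}}) : Prop :=
  [/\ C != set0,
      {subset C <= dnode},
      (forall p q, p \in C -> q \in C -> connect dedge p q) &
      (forall p q, p \in C -> dnode q -> connect dedge p q -> connect dedge q p ->
         q \in C)].

Definition sink_component (C : {set V * {set U}}) : Prop :=
  scc C /\ (forall p q, p \in C -> dedge p q -> q \in C).

End EventGraph.

(* Main.v *)
Require Import Defs.
From mathcomp Require Import all_boot.
Set Implicit Arguments. Unset Strict Implicit. Unset Printing Implicit Defensive.

Definition upd (V U : finType) (ins : V -> bool) (x : V -> U) (X : {set U}) v :=
  if ins v then x v |: X else X :\ x v.
Definition run (V U : finType) (ins : V -> bool) (x : V -> U) (X : {set U}) (s : seq V) :=
  foldl (upd ins x) X s.

Lemma upd_sub (V U : finType) (ins : V -> bool) (x : V -> U) (X : {set U}) (v : V) :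
  X \subset UV x -> upd ins x X v \subset UV x.
Proof.
move=> sX; rewrite /upd; case: (ins v).
  by rewrite subUset sub1set sX andbT; apply/imsetP; exists v.
exact: subset_trans (subD1set _ _) sX.
Qed.

Lemma walk (V U : finType) (e : rel V) (ins : V -> bool) (x : V -> U) :
  forall s u (X : {set U}), path e u s -> X \subset UV x ->
  connect (dedge e ins x) (u, X) (last u s, run ins x X s).
Proof.
elim=> [|v s IH] u X /=; first by move=> _ _; exact: connect0.
case/andP=> euv ps sX.
apply: connect_trans (IH v _ ps (upd_sub ins v sX)); rewrite /run /=.
apply: connect1; rewrite /dedge /dnode /= sX upd_sub // euv /=.
by rewrite /upd eqxx.
Qed.

Lemma run_mem (V U : finType) (ins : V -> bool) (x : V -> U) (X Y : {set U}) :
  forall s y, (exists2 v, v \in s & x v = y) ->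
  (y \in run ins x X s) = (y \in run ins x Y s).
Proof.
elim/last_ind=> [|s v IH] y [w]; first by [].
rewrite /run !foldl_rcons -/(run ins x X s) -/(run ins x Y s).
have [<- _ _|nvy] := eqVneq (x v) y.
  by rewrite /upd; case: (ins v); rewrite ?in_setU1 ?in_setD1 eqxx.
rewrite mem_rcons in_cons => /orP [/eqP -> /eqP|ws xw]; first by rewrite (negbTE nvy).
rewrite /upd; case: (ins v); rewrite ?in_setU1 ?in_setD1 (IH y) //; by exists w.
Qed.

Lemma run_sub (V U : finType) (ins : V -> bool) (x : V -> U) (X : {set U}) (s : seq V) :
  X \subset UV x -> run ins x X s \subset UV x.
Proof. by elim: s X => [|v s IH] X //= sX; apply: IH; apply: upd_sub. Qed.

Lemma run_indep (V U : finType) (ins : V -> bool) (x : V -> U) (X Y : {set U}) (s : seq V) :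
  (forall v, v \in s) -> X \subset UV x -> Y \subset UV x ->
  run ins x X s = run ins x Y s.
Proof.
move=> all sX sY; apply/setP=> y.
case: (boolP (y \in UV x)) => [/imsetP [v _ ->]|nyU].
  by apply: run_mem; exists v.
apply/idP/idP => yr.
  by move: nyU; rewrite (subsetP (@run_sub _ _ ins _ _ s sX) _ yr).
by move: nyU; rewrite (subsetP (@run_sub _ _ ins _ _ s sY) _ yr).
Qed.

Lemma loop1 (V U : finType) (e : rel V) (ins : V -> bool) (x : V -> U) v0 a :
  event_graph e ins x ->
  exists t, [/\ path e v0 t, last v0 t = v0 & a \in t].
Proof.
case=> _ esym _ conn lab.
have [a0|anv] := eqVneq a v0.
  have [[u [xu iu]] [w [xw iw]]] := lab v0.
  have : exists2 b, b != v0 & true.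
    have [uv|] := eqVneq u v0; last by exists u.
    exists w => //; apply/eqP=> wv; move: iw iu; rewrite uv -wv => /negbTE -> //.
  case=> b bv _.
  case/connectP: (conn v0 b) => [[|w1 p]] /=; first by move=> _ /eqP; rewrite (negbTE bv).
  case/andP=> e1 _ _.
  exists [:: w1; v0]; rewrite /= e1 /= esym e1 a0 !inE eqxx orbT; split=> //.
case/connectP: (conn v0 a) => p1 pp1 la.
case/connectP: (conn a v0) => p2 pp2 lb.
exists (p1 ++ p2); rewrite cat_path last_cat -la pp1 pp2 -lb; split=> //.
rewrite mem_cat; apply/orP; left.
have := mem_last v0 p1; rewrite -la in_cons (negbTE anv) //.
Qed.

Lemma cover (V U : finType) (e : rel V) (ins : V -> bool) (x : V -> U) v0 :
  event_graph e ins x -> forall l : seq V,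
  exists t, [/\ path e v0 t, last v0 t = v0 & {subset l <= t}].
Proof.
move=> eg; elim=> [|a l [t [pt lt st]]]; first by exists [::].
have [t2 [pt2 lt2 at2]] := loop1 v0 a eg.
exists (t ++ t2); rewrite cat_path last_cat lt pt pt2; split=> // b.
rewrite in_cons mem_cat => /orP [/eqP ->|/st ->]; last by [].
by rewrite at2 orbT.
Qed.

Lemma closed_conn (T : finType) (r : rel T) (C : {set T}) p q :
  (forall p q, p \in C -> r p q -> q \in C) -> p \in C -> connect r p q -> q \in C.
Proof.
move=> cl pC /connectP [s ps ->]; elim: s p pC ps => [|v s IH] p pC //=.
by case/andP=> rpv ps; apply: IH ps; apply: cl rpv.
Qed.

Theorem mainTheorem4 (V U : finType) (e : rel V) (ins : V -> bool) (x : V -> U) :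
  event_graph e ins x ->
  exists C : {set V * {set U}},
    [/\ sink_component e ins x C,
        (forall C', sink_component e ins x C' -> C' = C) &
        (forall p, dnode x p -> exists2 q, q \in C & connect (dedge e ins x) p q)].
Proof.
move=> eg; have eg' := eg; case: eg' => V0 _ _ conn _.
have [v0 _] : exists v0 : V, true.
  by case/card_gt0P: V0 => v _; exists v.
have [s [ps ls alls]] := cover v0 eg (enum V).
have alls' : forall v, v \in s by move=> v; apply: alls; rewrite mem_enum.
set z := (v0, run ins x set0 s).
have zreach : forall p, dnode x p -> connect (dedge e ins x) p z.
  case=> u X; rewrite /dnode /= => sX.
  case/connectP: (conn u v0) => r pr lr.
  have := @walk _ _ e ins x (r ++ s) u X; rewrite cat_path pr -lr ps last_cat -lr ls => /(_ isT sX).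
  rewrite /run foldl_cat -/(run ins x X r) -/(run ins x _ s).
  by rewrite (@run_indep _ _ ins x _ set0 s alls' (@run_sub _ _ ins _ _ r sX) (sub0set _)).
have zn : dnode x z by rewrite /dnode /=; apply: run_sub; apply: sub0set.
have dn : forall q, connect (dedge e ins x) z q -> dnode x q.
  have gen : forall p y, dnode x y -> path (dedge e ins x) y p -> dnode x (last y p).
    elim=> [|w p IH] y yn //=.
    by case/andP=> /and4P [_ wn _ _] pp; apply: IH.
  by move=> q /connectP [p pp ->]; apply: gen.
set R := [set q | connect (dedge e ins x) z q].
have zR : z \in R by rewrite inE connect0.
have sinkR : sink_component e ins x R.
  split; last by move=> p q; rewrite !inE => zp pq; apply: connect_trans zp (connect1 pq).
  split.
  - by apply/set0Pn; exists z.
  - by move=> q; rewrite inE; apply: dn.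
  - move=> p q; rewrite !inE => zp zq; apply: connect_trans zq.
    exact: zreach (dn _ zp).
  - by move=> p q; rewrite !inE => zp _ pq _; apply: connect_trans pq.
exists R; split=> //.
  move=> C [[C0 Cn Cc Cm] Cs].
  case/set0Pn: C0 => p pC.
  have zC : z \in C by apply: closed_conn Cs pC (zreach _ (Cn _ pC)).
  apply/setP=> q; rewrite inE; apply/idP/idP.
    by move=> qC; apply: Cc.
  by move=> zq; apply: closed_conn Cs zC zq.
by move=> p pn; exists z => //; apply: zreach.
Qed.
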